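(* Let $V$ be a poset, $m$ a maximal node of $V$ of positive height, and $U$ a splitting of $V$ at $m$ with splitting map $\varphi$. Suppose $U\cong\operatorname{Spec}R$ (as posets) for some commutative Noetherian ring $R$ such that $R/M\cong R/N$ for all maximal ideals $M,N$ of $R$. Then there exists a Noetherian subring $L\subseteq R$ with $\operatorname{Spec}L\cong V$.
   Context: Splitting: for a poset $V$ with a maximal node $m$ of positive height (height = supremum of lengths of chains below the node), a poset $U$ is a splitting of $V$ at $m$ with splitting map $\varphi$ if $\varphi:U\to V$ is surjective order-preserving, there is a finite nonempty set $\mathcal M\subseteq\max U$ of positive-height nodes with $\varphi^{-1}(m)=\mathcal M$, $|\varphi^{-1}(v)|=1$ for $v\ne m$, and whenever $\varphi(x')=x\le y$ there is $y'\ge x'$ with $\varphi(y')=y$. Spectra are ordered by inclusion; $\cong$ means order isomorphism. *)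

(* Defs.v *)
From HB Require Import structures.
From mathcomp Require Import all_boot all_order all_algebra.
Set Implicit Arguments. Unset Strict Implicit. Unset Printing Implicit Defensive.
Import Order.TTheory GRing.Theory.
Local Open Scope order_scope.

Section Posets.
Context {d : Order.disp_t} {T : porderType d}.

Definition chain_below (x : T) (n : nat) : Prop :=
  exists s : seq T, size s = n.+1 /\ sorted (fun a b => a < b) s /\ last x s = x.

(* height x = sup of lengths of chains below x; positive height means
   this supremum is > 0, i.e. some chain of positive length ends at x *)
Definition pos_height (x : T) : Prop := exists n, (0 < n)%N /\ chain_below x n.

Definition maximal (x : T) : Prop := forall y : T, x <= y -> y = x.
End Posets.

Definition splitting {dU dV : Order.disp_t} (U : porderType dU) (V : porderType dV)
    (m : V) (phi : U -> V) : Prop :=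
  [/\ (forall v : V, exists u : U, phi u = v),
      (forall x y : U, x <= y -> phi x <= phi y),
      (exists Ms : seq U, [/\ Ms != [::],
          (forall u, u \in Ms -> maximal u /\ pos_height u) &
          (forall u, phi u = m <-> u \in Ms)]),
      (forall v : V, v <> m -> exists! u : U, phi u = v) &
      (forall (x' : U) (y : V), phi x' <= y -> exists y' : U, x' <= y' /\ phi y' = y)].

Local Open Scope ring_scope.
Section Rings.
Variable R : comPzRingType.

Definition subset (A B : R -> Prop) : Prop := forall x, A x -> B x.
Definition seteq (A B : R -> Prop) : Prop := forall x, A x <-> B x.

Definition is_subring (S : R -> Prop) : Prop :=
  [/\ S 1, (forall x y, S x -> S y -> S (x - y)) & (forall x y, S x -> S y -> S (x * y))].

Definition ideal_of (S I : R -> Prop) : Prop :=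
  [/\ subset I S, I 0, (forall x y, I x -> I y -> I (x + y)) &
      (forall s x, S s -> I x -> I (s * x))].

Definition prime_ideal_of (S P : R -> Prop) : Prop :=
  [/\ ideal_of S P, ~ P 1 &
      (forall a b, S a -> S b -> P (a * b) -> P a \/ P b)].

Definition maximal_ideal_of (S M : R -> Prop) : Prop :=
  [/\ ideal_of S M, ~ M 1 &
      (forall J, ideal_of S J -> ~ J 1 -> subset M J -> seteq J M)].

Definition noetherian_of (S : R -> Prop) : Prop :=
  forall I : nat -> R -> Prop, (forall n, ideal_of S (I n)) ->
    (forall n, subset (I n) (I n.+1)) ->
    exists N, forall n, (N <= n)%N -> seteq (I n) (I N).

Definition setT_R : R -> Prop := fun _ => True.

Definition spec_iso_to {d : Order.disp_t} (S : R -> Prop) (T : porderType d)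
    : Prop :=
  exists f : T -> R -> Prop,
    [/\ (forall t, prime_ideal_of S (f t)),
        (forall t t', (t <= t')%O <-> subset (f t) (f t')) &
        (forall P, prime_ideal_of S P -> exists t, seteq P (f t))].

(* R/M and R/N are isomorphic as rings, expressed on representatives:
   g : R -> R induces a well-defined bijective ring map R/M -> R/N. *)
Definition quot_iso (M N : R -> Prop) : Prop :=
  exists g : R -> R,
    [/\ (forall a b, M (a - b) -> N (g a - g b)),
        (forall a b, N (g (a + b) - (g a + g b))),
        (forall a b, N (g (a * b) - g a * g b)),
        N (g 1 - 1) &
        ((forall a, N (g a) -> M a) /\
         (forall y, exists x, N (g x - y)))].
End Rings.

(* Main.v *)
From Pilot Require Import Defs.
From HB Require Import structures.
From mathcomp Require Import all_boot all_order all_algebra.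
From mathcomp Require Import ring.
From Stdlib Require Import Classical ClassicalEpsilon.
Import Pilot.Defs.
Set Implicit Arguments. Unset Strict Implicit. Unset Printing Implicit Defensive.
Import Order.TTheory GRing.Theory.
Local Open Scope ring_scope.

Section Gen.
Variable R : comPzRingType.
Implicit Types (S I P : R -> Prop).

Lemma memE I x y : I x -> x = y -> I y. Proof. by move=> h <-. Qed.

Definition Rideal I := ideal_of (@setT_R R) I.

Lemma Rid0 I : Rideal I -> I 0. Proof. by case. Qed.
Lemma RidD I x y : Rideal I -> I x -> I y -> I (x + y). Proof. by case=> _ _ h _; apply: h. Qed.
Lemma RidM I s x : Rideal I -> I x -> I (s * x). Proof. by case=> _ _ _ h; apply: h. Qed.
Lemma RidMr I s x : Rideal I -> I x -> I (x * s). Proof. by move=> h hx; rewrite mulrC; apply: RidM. Qed.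
Lemma RidN I x : Rideal I -> I x -> I (- x).
Proof. move=> h hx; apply: (memE (RidM (-1) h hx)); ring. Qed.
Lemma RidB I x y : Rideal I -> I x -> I y -> I (x - y).
Proof. by move=> h hx hy; apply: RidD => //; apply: RidN. Qed.

Lemma maxinv M x : maximal_ideal_of (@setT_R R) M -> ~ M x -> exists y, M (x * y - 1).
Proof.
case=> hM n1 hmax nx.
pose J' z := exists r m, M m /\ z = m + r * x.
have hJ : ideal_of (@setT_R R) J'.
  split => //.
  - by exists 0, 0; split; [apply: (Rid0 hM)|rewrite mul0r addr0].
  - move=> a b [r [m [hm ->]]] [r' [m' [hm' ->]]]; exists (r + r'), (m + m'); split.
      by apply: RidD.
    ring.
  - move=> s a _ [r [m [hm ->]]]; exists (s * r), (s * m); split; first by apply: RidM.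
    ring.
case: (classic (J' 1)) => [[r [m [hm e]]]|n1'].
  exists r; apply: (memE (RidN hM hm)); rewrite e; ring.
exfalso; apply: nx; apply/(hmax _ hJ n1').
  by move=> z hz; exists 0, z; split => //; rewrite mul0r addr0.
by exists 1, 0; split; [apply: (Rid0 hM)|rewrite mul1r add0r].
Qed.

Lemma max_prime M : maximal_ideal_of (@setT_R R) M -> prime_ideal_of (@setT_R R) M.
Proof.
move=> hM; have [hI n1 _] := hM; split => // a b _ _ hab.
case: (classic (M a)) => ha; [by left|right].
have [u hu] := maxinv hM ha.
apply: (memE (RidB hI (RidM (u) hI hab) (RidM b hI hu))); ring.
Qed.

Lemma prime_prod P (s : seq nat) (F : nat -> R) :
  prime_ideal_of (@setT_R R) P -> P (\prod_(i <- s) F i) -> exists2 i, i \in s & P (F i).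
Proof.
move=> [hI n1 hp]; elim: s => [|a s IH]; first by rewrite big_nil.
rewrite big_cons => /hp [] // h; first by exists a; rewrite ?inE ?eqxx.
by have [i hi hF] := IH h; exists i; rewrite // inE hi orbT.
Qed.

Lemma ideal_prod I (s : seq nat) (F : nat -> R) j :
  Rideal I -> j \in s -> I (F j) -> I (\prod_(i <- s) F i).
Proof.
move=> hI; elim: s => [|a s IH] //; rewrite big_cons inE => /orP [/eqP -> h|hj h].
  by apply: RidMr.
exact: (RidM _ hI (IH hj h)).
Qed.

Lemma prod_one I (s : seq nat) (P : pred nat) (F : nat -> R) :
  Rideal I -> (forall i, P i -> I (F i - 1)) -> I (\prod_(i <- s | P i) F i - 1).
Proof.
move=> hI h; apply: (big_ind (fun y => I (y - 1))).
- by rewrite subrr; apply: Rid0.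
- move=> x y hx hy; apply: (memE (RidD hI (RidM x hI hy) hx)); ring.
- exact: h.
Qed.

Lemma ideal_sum I (s : seq nat) (P : pred nat) (F : nat -> R) :
  Rideal I -> (forall i, P i -> I (F i)) -> I (\sum_(i <- s | P i) F i).
Proof.
move=> hI h; apply: (big_ind I) => //; first exact: Rid0.
by move=> x y; apply: RidD.
Qed.

Lemma maxcond S (Fam : (R -> Prop) -> Prop) I0 :
  noetherian_of S -> (forall I, Fam I -> ideal_of S I) -> Fam I0 ->
  exists I, Fam I /\ forall I', Fam I' -> subset I I' -> subset I' I.
Proof.
move=> hN hF h0; apply: NNPP => hno.
have step : forall X : {I | Fam I}, exists Y : {I | Fam I},
    subset (sval X) (sval Y) /\ ~ subset (sval Y) (sval X).
  move=> [X hX]; apply: NNPP => hn; apply: hno; exists X; split => // I' hI' hs.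
  apply: NNPP => hn2; apply: hn; by exists (exist _ I' hI').
pose st X := sval (constructive_indefinite_description _ (step X)).
pose sq n := iter n st (exist _ I0 h0).
have [N hNn] := hN (fun n => sval (sq n)) (fun n => hF _ (svalP (sq n)))
  (fun n => proj1 (svalP (constructive_indefinite_description _ (step (sq n))))).
have := proj2 (svalP (constructive_indefinite_description _ (step (sq N)))).
by apply; move=> x hx; apply/(hNn N.+1 (leqnSn N)).
Qed.

End Gen.

Section LC.
Variable R : comPzRingType.
Implicit Types (C B K : R -> Prop) (w : seq R).

Fixpoint lc C B w (x : R) : Prop :=
  match w with [::] => B x | a :: w' => exists c, C c /\ lc C B w' (x - c * a) end.

Definition addsub B := B 0 /\ forall x y, B x -> B y -> B (x - y).

Lemma lc_B C B w x : C 0 -> B x -> lc C B w x.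
Proof. move=> h0; elim: w x => [|a w IH] x //= hx; exists 0; split => //; rewrite mul0r subr0; exact: IH. Qed.

Lemma lc_sub C B w x y : addsub C -> addsub B -> lc C B w x -> lc C B w y -> lc C B w (x - y).
Proof.
move=> [hC0 hC] [hB0 hB]; elim: w x y => [|a w IH] x y /=; first exact: hB.
move=> [c [hc hx]] [c' [hc' hy]]; exists (c - c'); split; first exact: hC.
apply: (memE (IH _ _ hx hy)); ring.
Qed.

Lemma lc_0 C B w : C 0 -> B 0 -> lc C B w 0. Proof. by move=> *; apply: lc_B. Qed.

Lemma lc_add C B w x y : addsub C -> addsub B -> lc C B w x -> lc C B w y -> lc C B w (x + y).
Proof.
move=> hC hB hx hy; have h0 := lc_0 w hC.1 hB.1.
apply: (memE (lc_sub hC hB hx (lc_sub hC hB h0 hy))); ring.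
Qed.

Lemma lc_mul C B w d x : (forall a b, C a -> C b -> C (a * b)) ->
  (forall c y, C c -> B y -> B (c * y)) -> C d -> lc C B w x -> lc C B w (d * x).
Proof.
move=> hCm hBm hd; elim: w x => [|a w IH] x /=; first exact: hBm.
move=> [c [hc hx]]; exists (d * c); split; first exact: hCm.
apply: (memE (IH _ hx)); ring.
Qed.

Lemma lc_mono C B B' w x : (forall y, B y -> B' y) -> lc C B w x -> lc C B' w x.
Proof. move=> h; elim: w x => [|a w IH] x /=; first exact: h.
by move=> [c [hc hx]]; exists c; split => //; apply: IH. Qed.

Lemma lc_catl C B w w' x : C 0 -> lc C B w x -> lc C B (w ++ w') x.
Proof. move=> h0; elim: w x => [|a w IH] x /=; first by move=> hx; apply: lc_B.
by move=> [c [hc hx]]; exists c; split => //; apply: IH. Qed.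

Lemma lc_catr C B w w' x : C 0 -> lc C B w' x -> lc C B (w ++ w') x.
Proof. move=> h0; elim: w x => [|a w IH] x //= hx.
by exists 0; split => //; rewrite mul0r subr0; apply: IH. Qed.

Lemma lc_in C B w a : C 0 -> C 1 -> B 0 -> a \in w -> lc C B w a.
Proof.
move=> h0 h1 hB0; elim: w => [|b w IH] //; rewrite inE => /orP [/eqP ->|ha] /=.
  by exists 1; split => //; rewrite mul1r subrr; apply: lc_B.
by exists 0; split => //; rewrite mul0r subr0; apply: IH.
Qed.

Lemma lc_mulr C B w x a : lc C B w x ->
  lc C (fun y => exists b, B b /\ y = b * a) [seq e * a | e <- w] (x * a).
Proof.
elim: w x => [|e w IH] x /=; first by move=> hx; exists x.
move=> [c [hc hx]]; exists c; split => //; apply: (memE (IH _ hx)); ring.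
Qed.

Lemma lcP C B w x (c : nat -> R) : (forall i, (i < size w)%N -> C (c i)) ->
  B (x - \sum_(i < size w) c i * w`_i) -> lc C B w x.
Proof.
elim: w x c => [|a w IH] x c /=; first by rewrite big_ord0 subr0.
move=> hc hB; exists (c 0%N); split; first exact: hc.
apply: (IH _ (fun i => c i.+1)); first by move=> i hi; apply: hc.
by rewrite big_ord_recl /= in hB; apply: (memE hB); rewrite opprD addrA.
Qed.

End LC.

Section ACC.
Variable R : comPzRingType.
Implicit Types (C B K : R -> Prop) (w : seq R).

Lemma as_add B x y : addsub B -> B x -> B y -> B (x + y).
Proof. move=> [h0 hB] hx hy; apply: (memE (hB _ _ hx (hB _ _ h0 hy))); ring. Qed.

Lemma chain_le (N : nat -> R -> Prop) : (forall n, subset (N n) (N n.+1)) ->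
  forall n m, (n <= m)%N -> subset (N n) (N m).
Proof.
move=> h n; elim=> [|m IH]; first by rewrite leqn0 => /eqP -> .
rewrite leq_eqVlt => /orP [/eqP ->|hm] //.
by move=> x hx; apply: h; apply: IH.
Qed.

Lemma accfin (L J K : R -> Prop) w (N : nat -> R -> Prop) :
  addsub L -> L 1 -> (forall a b, L a -> L b -> L (a * b)) ->
  (forall l, L l -> ~ J l -> exists l', L l' /\ J (l * l' - 1)) ->
  addsub K -> (forall c y, L c -> K y -> K (c * y)) ->
  (forall n, addsub (N n)) -> (forall n c y, L c -> N n y -> N n (c * y)) ->
  (forall n, subset K (N n)) -> (forall n, subset (N n) (lc L K w)) ->
  (forall j a, J j -> a \in w -> K (j * a)) ->
  (forall n, subset (N n) (N n.+1)) ->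
  exists M, forall n, (M <= n)%N -> subset (N n) (N M).
Proof.
move=> hL hL1 hLm hinv hK hKm.
elim: w N => [|a w IH] N hN hNm hKN hNlc hJw hmono.
  by exists 0%N => n _ x /hNlc /= /(hKN 0%N).
have hle := chain_le hmono.
pose N' n x := N n x /\ lc L K w x.
have [M1 hM1] : exists M1, forall n, (M1 <= n)%N -> subset (N' n) (N' M1).
apply: IH.
- move=> n; split; first by split; [apply: (hN n).1|apply: lc_0; [apply: hL.1|apply: hK.1]].
  by move=> x y [h1 h2] [h3 h4]; split; [apply: (hN n).2|apply: lc_sub].
- by move=> n c y hc [h1 h2]; split; [apply: hNm|apply: lc_mul].
- by move=> n x hx; split; [apply: hKN|apply: lc_B => //; apply: hL.1].
- by move=> n x [].
- by move=> j a' hj ha'; apply: hJw => //; rewrite inE ha' orbT.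
- by move=> n x [h1 h2]; split => //; apply: hmono.
pose C n c := L c /\ exists y, lc L K w y /\ N n (c * a + y).
have key : exists M, (M1 <= M)%N /\ forall n, (M <= n)%N -> forall c x,
    L c -> N n x -> C n c -> C M c.
  case: (classic (exists n0, C n0 1)) => [[n0 [_ [y1 [hy1 hn0]]]]|hno].
    exists (maxn M1 n0); split; first exact: leq_maxl.
    move=> n hn c x hc _ _; split => //; exists (c * y1); split; first exact: lc_mul.
    have := hNm _ c _ hc (hle _ _ (leq_maxr M1 n0) _ hn0).
    by move=> h; apply: (memE h); ring.
  exists M1; split => // n hn c x hc hx [_ [y [hy hxy]]].
  case: (classic (J c)) => hJc.
    split => //; exists 0; split; first by apply: lc_0; [apply: hL.1|apply: hK.1].
    rewrite addr0; apply: hKN; apply: hJw => //; by rewrite inE eqxx.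
  exfalso; have [c' [hc' hcc]] := hinv _ hc hJc; apply: hno; exists n.
  split => //; exists (c' * y); split; first exact: lc_mul.
  have h1 := hNm _ c' _ hc' hxy.
  have h2 : N n ((c * c' - 1) * a).
    by apply: hKN; apply: hJw => //; rewrite inE eqxx.
  by apply: (memE ((hN n).2 _ _ h1 h2)); ring.
have [M [hMM1 hM]] := key.
exists M => n hn x hx.
have /= [c [hc hxc]] := hNlc n x hx.
have hxx : N n (c * a + (x - c * a)) by apply: (memE hx); ring.
have [_ [y' [hy' hM']]] := hM n hn c x hc hx (conj hc (ex_intro _ (x - c * a) (conj hxc hxx))).
have hz : N n (x - (c * a + y')) /\ lc L K w (x - (c * a + y')).
  split; first by apply: (hN n).2 => //; apply: (hle _ _ hn).
  by apply: (memE (lc_sub hL hK hxc hy')); ring.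
have [hz1 _] := hM1 n (leq_trans hMM1 hn) _ hz.
have hz2 := hle _ _ hMM1 _ hz1.
by apply: (memE (as_add (hN M) hz2 hM')); ring.
Qed.

End ACC.

Section Sums.
Variable R : comPzRingType.
Implicit Types (C A T : R -> Prop).

Inductive sums C A : R -> Prop :=
| s0 : sums C A 0
| sadd c a x : C c -> A a -> sums C A x -> sums C A (c * a + x).

Lemma sums_add C A x y : sums C A x -> sums C A y -> sums C A (x + y).
Proof.
elim=> [|c a x' hc ha _ IH] hy; first by rewrite add0r.
by rewrite -addrA; apply: sadd => //; apply: IH.
Qed.

Lemma sums_mul C A s x : (forall c, C c -> C (s * c)) -> sums C A x -> sums C A (s * x).
Proof.
move=> hC; elim=> [|c a x' hc ha _ IH]; first by rewrite mulr0; apply: s0.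
rewrite mulrDr mulrA; apply: sadd => //; exact: hC.
Qed.

Lemma sums_ideal C A : (forall s c, C c -> C (s * c)) -> Rideal (sums C A).
Proof.
move=> hC; split.
- by [].
- exact: s0.
- by move=> x y; apply: sums_add.
- by move=> s x _; apply: sums_mul => // c; apply: hC.
Qed.

Lemma sums_mono C A A' x : (forall y, A y -> A' y) -> sums C A x -> sums C A' x.
Proof.
move=> h; elim=> [|c a x' hc ha _ IH]; first exact: s0.
by apply: sadd => //; apply: h.
Qed.

Lemma sums_in C A x : C 1 -> A x -> sums C A x.
Proof. by move=> h1 hx; rewrite -[x]addr0 -[x]mul1r; apply: sadd => //; apply: s0. Qed.

Lemma sums_J J' A j x : Rideal J' -> J' j -> sums (@setT_R R) A x -> sums J' A (j * x).
Proof.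
move=> hJ hj; elim=> [|c a x' hc ha _ IH]; first by rewrite mulr0; apply: s0.
rewrite mulrDr mulrA; apply: sadd => //; exact: RidMr.
Qed.

Definition zero (x : R) := x = 0.

Lemma lc_ideal t : Rideal (lc (@setT_R R) zero t).
Proof.
have hC : addsub (@setT_R R) by [].
have hB : addsub zero by split => // x y -> ->; rewrite subr0.
split => //.
- by apply: lc_0.
- by move=> x y; apply: lc_add.
- by move=> s x _; apply: lc_mul => // c y _ ->; rewrite mulr0.
Qed.

Lemma fg T : noetherian_of (@setT_R R) -> Rideal T ->
  exists t, (forall x, x \in t -> T x) /\ subset T (lc (@setT_R R) zero t).
Proof.
move=> hN hT.
pose Fam G := exists t, (forall x, x \in t -> T x) /\ G = lc (@setT_R R) zero t.
have [G [[t [ht ->]] hmax]] : exists G, Fam G /\ forall G', Fam G' -> subset G G' -> subset G' G.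
  apply: (maxcond (I0 := lc (@setT_R R) zero [::]) hN).
    by move=> I [t [_ ->]]; apply: lc_ideal.
  by exists [::].
exists t; split => // x hx; apply: NNPP => hn; apply: hn.
apply: (hmax (lc (@setT_R R) zero (x :: t))).
- exists (x :: t); split => // y; rewrite inE => /orP [/eqP ->|]; [done|exact: ht].
- by move=> y hy; apply: (@lc_catr _ _ _ [:: x]).
- by apply: lc_in; rewrite ?inE ?eqxx.
Qed.

End Sums.

Section Glue.
Set Default Proof Using "All".
Variable R : comPzRingType.
Variable k : nat.
Hypothesis hk : (0 < k)%N.
Variable M : nat -> R -> Prop.
Hypothesis hM : forall i, (i < k)%N -> maximal_ideal_of (@setT_R R) (M i).
Variable a : nat -> nat -> R.
Hypothesis ha : forall i j, (i < k)%N -> (j < k)%N -> i != j -> M j (a i j) /\ M i (a i j - 1).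
Variable g : nat -> R -> R.
Hypothesis hg : forall i, (i < k)%N ->
  [/\ (forall x y, M i (x - y) -> M 0 (g i x - g i y)),
      (forall x y, M 0 (g i (x + y) - (g i x + g i y))),
      (forall x y, M 0 (g i (x * y) - g i x * g i y)),
      M 0 (g i 1 - 1) &
      ((forall x, M 0 (g i x) -> M i x) /\ (forall y, exists x, M 0 (g i x - y)))].

Definition e i := \prod_(j <- iota 0 k | j != i) a i j.
Definition L x := forall i, (0 < i < k)%N -> M 0 (g i x - x).
Definition J x := forall i, (i < k)%N -> M i x.

Lemma hI i : (i < k)%N -> Rideal (M i). Proof. by move=> /hM []. Qed.
Lemma hI0 : Rideal (M 0). Proof. exact: hI. Qed.

Lemma e_in i j : (i < k)%N -> (j < k)%N -> j != i -> M j (e i).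
Proof.
move=> hi hj hji; rewrite /e -big_filter; apply: (@ideal_prod _ _ _ _ j (hI hj)).
  by rewrite mem_filter /= hji mem_iota /= hj.

by apply: (ha hi hj _).1; rewrite eq_sym.
Qed.

Lemma e_one i : (i < k)%N -> M i (e i - 1).
Proof.
move=> hi; rewrite /e big_seq_cond; apply: (prod_one _ (hI hi)).
by move=> j /andP [hj hji]; rewrite mem_iota in hj; apply: (ha hi _ _).2; rewrite // eq_sym.
Qed.

Lemma crt_sum (x : nat -> R) j : (j < k)%N -> M j (\sum_(i <- iota 0 k) x i * e i - x j).
Proof.
move=> hj.
rewrite (bigD1_seq j) ?mem_iota ?iota_uniq //=.
have h1 : M j (\sum_(i <- iota 0 k | i != j) x i * e i).
  rewrite big_seq_cond; apply: (ideal_sum _ (hI hj)) => i /andP [hi hij].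
  rewrite mem_iota in hi; apply: RidM; first exact: hI.
  by apply: e_in => //; rewrite eq_sym.
have h2 := RidM (x j) (hI hj) (e_one hj).
by apply: (memE (RidD (hI hj) h2 h1)); ring.
Qed.

Lemma crt (x : nat -> R) : exists l, forall i, (i < k)%N -> M i (l - x i).
Proof. by exists (\sum_(i <- iota 0 k) x i * e i) => j hj; apply: crt_sum. Qed.

Lemma g0 i : (i < k)%N -> M 0 (g i 0).
Proof.
move=> hi; have [_ hadd _ _ _] := hg hi.
have := RidN hI0 (hadd 0 0); rewrite addr0 => h.
by apply: (memE h); ring.
Qed.

Lemma gB i x y : (i < k)%N -> M 0 (g i (x - y) - (g i x - g i y)).
Proof.
move=> hi; have [hwd hadd _ _ _] := hg hi.
have h1 := hadd (x - y) y; rewrite subrK in h1.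
by apply: (memE (RidN hI0 h1)); ring.
Qed.

Lemma gwd0 i x : (i < k)%N -> M i x -> M 0 (g i x).
Proof.
move=> hi hx; have [hwd _ _ _ _] := hg hi.
have h := hwd x 0 (memE hx (esym (subr0 x))).
by apply: (memE (RidD hI0 h (g0 hi))); ring.
Qed.

Lemma L0 : L 0.
Proof. move=> i /andP [_ hi]; rewrite subr0; exact: g0. Qed.
Lemma L1 : L 1.
Proof. by move=> i /andP [_ hi]; have [] := hg hi. Qed.
Lemma LB x y : L x -> L y -> L (x - y).
Proof.
move=> hx hy i hi; have hik := (andP hi).2.
have := RidD hI0 (gB x y hik) (RidB hI0 (hx i hi) (hy i hi)).
by move=> h; apply: (memE h); ring.
Qed.
Lemma LM x y : L x -> L y -> L (x * y).
Proof.
move=> hx hy i hi; have hik := (andP hi).2; have [_ _ hmul _ _] := hg hik.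
have h := RidD hI0 (hmul x y) (RidD hI0 (RidM (g i x) hI0 (hy i hi)) (RidM y hI0 (hx i hi))).
by apply: (memE h); ring.
Qed.
Lemma LD x y : L x -> L y -> L (x + y).
Proof. by move=> hx hy; apply: (memE (LB hx (LB L0 hy))); ring. Qed.
Lemma Las : addsub L. Proof. by split; [apply: L0|apply: LB]. Qed.
Lemma subringL : is_subring L. Proof. by split; [apply: L1|apply: LB|apply: LM]. Qed.

Lemma LMiff x i : L x -> (i < k)%N -> (M 0 x <-> M i x).
Proof.
move=> hx hi; case: (posnP i) => [->|hi0]; first by [].
have hik : (0 < i < k)%N by rewrite hi0 hi.
have [_ _ _ _ [hinj _]] := hg hi.
split => h.
  apply: hinj; by apply: (memE (RidD hI0 (hx i hik) h)); ring.
have := RidB hI0 (gwd0 hi h) (hx i hik).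
by move=> h'; apply: (memE h'); ring.
Qed.

Lemma JL x : J x -> L x.
Proof.
move=> hx i /andP [hi0 hi]; exact: (RidB hI0 (gwd0 hi (hx i hi)) (hx 0%N hk)).
Qed.

Lemma RidJ : Rideal J.
Proof.
split => //.
- by move=> i hi; apply: Rid0; apply: hI.
- by move=> x y hx hy i hi; apply: RidD; [apply: hI|apply: hx|apply: hy].
- by move=> s x _ hx i hi; apply: RidM; [apply: hI|apply: hx].
Qed.

Lemma J0 x : J x -> M 0 x. Proof. by move=> h; apply: h. Qed.

Lemma JLM x : L x -> M 0 x -> J x.
Proof. by move=> hL h i hi; apply/(LMiff hL hi). Qed.

Lemma lift i r : (i < k)%N -> exists l, L l /\ M i (l - r).
Proof.
move=> hi.
pose c := if i == 0%N then r else g i r.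
have hy : forall j, exists x, (0 < j < k)%N -> M 0 (g j x - c).
  move=> j; case: (boolP (0 < j < k)%N) => hj; last by exists 0.
  have [_ _ _ _ [_ hs]] := hg (andP hj).2; have [x hx] := hs c; by exists x.
pose y j := if j == 0%N then c else sval (constructive_indefinite_description _ (hy j)).
have hyj : forall j, (0 < j < k)%N -> M 0 (g j (y j) - c).
  move=> j hj; rewrite /y; have := svalP (constructive_indefinite_description _ (hy j)).
  by case: eqP => [e0|_]; [rewrite e0 in hj|apply].
have [l hl] := crt y.
have hl0 : M 0 (l - c) by have := hl 0%N hk; rewrite /y eqxx.
exists l; split.
  move=> j hj; have hjk := (andP hj).2; have [hwd _ _ _ _] := hg hjk.
  have h1 := hwd _ _ (hl j hjk).
  have h := RidB hI0 (RidD hI0 h1 (hyj j hj)) hl0.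
  by apply: (memE h); ring.
move: hl0; rewrite /c; case: eqP => [->|hi0] // _.
have hik : (0 < i < k)%N by rewrite hi andbT lt0n; apply/eqP.
have [_ _ _ _ [hinj _]] := hg hi.
have h1 : M i (y i - r).
  apply: hinj; have := RidD hI0 (gB (y i) r hi) (hyj i hik).
  by rewrite /c; case: eqP => // _ h; apply: (memE h); ring.
by apply: (memE (RidD (hI hi) (hl i hi) h1)); rewrite /y; case: eqP => // _; ring.
Qed.

Lemma invL l : L l -> ~ J l -> exists l', L l' /\ J (l * l' - 1).
Proof.
move=> hl hJ.
have n0 : ~ M 0 l by move=> h; apply: hJ; apply: JLM.
have [u hu] := maxinv (hM hk) n0.
have [l' [hl' hl'u]] := lift u hk.
exists l'; split => //; apply: JLM.
  by apply: LB; [apply: LM|apply: L1].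
by apply: (memE (RidD hI0 (RidM l hI0 hl'u) hu)); ring.
Qed.


Lemma Rlc r : lc L J (mkseq e k) r.
Proof.
have hl : forall i, exists l, (i < k)%N -> L l /\ M i (l - r).
  move=> i; case: (boolP (i < k)%N) => hi; last by exists 0.
  by have [l hl] := lift r hi; exists l.
pose c i := sval (constructive_indefinite_description _ (hl i)).
have hc : forall i, (i < k)%N -> L (c i) /\ M i (c i - r).
  by move=> i hi; apply: (svalP (constructive_indefinite_description _ (hl i))).
apply: (@lcP _ _ _ _ _ c); rewrite size_mkseq; first by move=> i /hc [].
have -> : \sum_(i < k) c i * (mkseq e k)`_i = \sum_(0 <= i < k) c i * e i.
  by rewrite -(big_mkord xpredT (fun i => c i * (mkseq e k)`_i)); apply: eq_big_nat => i /andP [_ hi]; rewrite nth_mkseq.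
move=> j hj; rewrite /index_iota subn0 (bigD1_seq j) ?mem_iota ?iota_uniq //=.
have h1 : M j (\sum_(i <- iota 0 k | i != j) c i * e i).
  rewrite big_seq_cond; apply: (ideal_sum _ (hI hj)) => i /andP [hi hij].
  rewrite mem_iota in hi; apply: RidM; first exact: hI.
  by apply: e_in => //; rewrite eq_sym.
have h2 := RidM (c j) (hI hj) (e_one hj).
have h3 := (hc j hj).2.
by apply: (memE (RidN (hI hj) (RidD (hI hj) (RidD (hI hj) h2 h1) h3))); ring.
Qed.

Lemma primeJ P : prime_ideal_of (@setT_R R) P -> (forall x, J x -> P x) ->
  exists2 i, (i < k)%N & subset (M i) P.
Proof.
move=> hP hJ; apply: NNPP => hno.
have hb : forall i, exists x, (i < k)%N -> M i x /\ ~ P x.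
  move=> i; case: (boolP (i < k)%N) => hi; last by exists 0.
  apply: NNPP => hn; apply: hno; exists i => // x hx; apply: NNPP => hpx.
  by apply: hn; exists x.
pose b i := sval (constructive_indefinite_description _ (hb i)).
have hbi : forall i, (i < k)%N -> M i (b i) /\ ~ P (b i).
  by move=> i hi; apply: (svalP (constructive_indefinite_description _ (hb i))).
have : P (\prod_(i <- iota 0 k) b i).
  apply: hJ => j hj; apply: (@ideal_prod _ _ _ _ j (hI hj)); first by rewrite mem_iota.
  exact: (hbi j hj).1.
move/(prime_prod hP) => [i]; rewrite mem_iota /= => hi.
exact: (hbi i hi).2.
Qed.

Lemma primeLJ P : prime_ideal_of (@setT_R R) P -> (forall x, L x -> P x -> J x) ->
  exists2 i, (i < k)%N & subset P (M i).
Proof.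
move=> hP hLJ; have [hPI _ _] := hP; apply: NNPP => hno.
have hb : forall i, exists x, (i < k)%N -> P x /\ ~ M i x.
  move=> i; case: (boolP (i < k)%N) => hi; last by exists 0.
  apply: NNPP => hn; apply: hno; exists i => // x hx; apply: NNPP => hpx.
  by apply: hn; exists x.
pose b i := sval (constructive_indefinite_description _ (hb i)).
have hbi : forall i, (i < k)%N -> P (b i) /\ ~ M i (b i).
  by move=> i hi; apply: (svalP (constructive_indefinite_description _ (hb i))).
have hq : forall i, exists q, (i < k)%N -> M i (b i * q - 1).
  move=> i; case: (boolP (i < k)%N) => hi; last by exists 0.
  by have [q hq] := maxinv (hM hi) (hbi i hi).2; exists q.
pose q i := sval (constructive_indefinite_description _ (hq i)).
have hqi : forall i, (i < k)%N -> M i (b i * q i - 1).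
  by move=> i hi; apply: (svalP (constructive_indefinite_description _ (hq i))).
pose z := \sum_(i <- iota 0 k) (b i * q i) * e i.
have hz : P z.
  rewrite /z big_seq; apply: (ideal_sum _ hPI) => i; rewrite mem_iota /= => hi.
  by apply: RidMr => //; apply: RidMr => //; apply: (hbi i hi).1.
have hz1 : J (z - 1).
  move=> j hj; have := RidD (hI hj) (crt_sum (fun i => b i * q i) hj) (hqi j hj).
  by move=> h; apply: (memE h); rewrite /z; ring.
have hLz : L z by apply: (memE (LB (JL hz1) (LB L0 L1))); ring.
have := RidB hI0 (hLJ z hLz hz 0%N hk) (hz1 0%N hk).
have [_ n1 _] := hM hk.
by move=> h; apply: n1; apply: (memE h); ring.
Qed.

Lemma Lm1 : L (-1). Proof. by apply: (memE (LB L0 L1)); rewrite sub0r. Qed.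

Lemma primeQJ Q : prime_ideal_of L Q -> (forall x, J x -> Q x) -> forall x, Q x <-> J x.
Proof.
move=> [[hsub hQ0 hQD hQM] n1 hp] hJ x; split => [hx|/hJ //].
apply: NNPP => hn; have [l' [hl' hll]] := invL (hsub _ hx) hn.
apply: n1; have h1 : Q (l' * x) := hQM _ _ hl' hx.
have h2 := hJ _ hll.
by apply: (memE (hQD _ _ h1 (hQM _ _ Lm1 h2))); ring.
Qed.

Lemma primeQj Q j : prime_ideal_of L Q -> J j -> ~ Q j ->
  prime_ideal_of (@setT_R R) (fun r => Q (r * j)) /\ forall x, L x -> (Q x <-> Q (x * j)).
Proof.
move=> [[hsub hQ0 hQD hQM] n1 hp] hj nj.
have hLj := JL hj.
have hLr : forall r, L (r * j) by move=> r; apply: JL; apply: (RidM r RidJ hj).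
split; last first.
  move=> x hx; split => [h|h]; first by rewrite mulrC; apply: hQM.
  by case: (hp _ _ hx hLj h).
split => //; first split => //.
- by rewrite mul0r.
- by move=> x y hx hy; rewrite mulrDl; apply: hQD.
- move=> s x _ hx.
  have h : Q ((s * j) * (x * j)) by apply: hQM.
  have h' : Q ((s * x * j) * j) by apply: (memE h); ring.
  by case: (hp _ _ (hLr _) hLj h').
- by rewrite mul1r.
- move=> x y _ _ h.
  have h' : Q ((x * j) * (y * j)) by apply: (memE (hQM _ _ hLj h)); ring.
  by case: (hp _ _ (hLr _) (hLr _) h'); [left|right].
Qed.

Lemma noethL : noetherian_of (@setT_R R) -> noetherian_of L.
Proof.
move=> hN I hI hmono.
have hIas : forall n, addsub (I n).
  move=> n; have [_ h0 hD hMm] := hI n; split => // x y hx hy.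
  by apply: (memE (hD _ _ hx (hMm _ _ Lm1 hy))); ring.
pose T n := sums (@setT_R R) (I n).
pose K n := sums J (I n).
have hT : forall n, Rideal (T n) by move=> n; apply: sums_ideal.
have hK : forall n, Rideal (K n).
  by move=> n; apply: sums_ideal => s c hc; apply: (RidM s RidJ hc).
have hTm : forall n, subset (T n) (T n.+1) by move=> n x; apply: sums_mono; apply: hmono.
have hKm : forall n, subset (K n) (K n.+1) by move=> n x; apply: sums_mono; apply: hmono.
have [N1 hN1] := hN T hT hTm.
have [N2 hN2] := hN K hK hKm.
pose N0 := maxn N1 N2.
have hTs : forall n, (N0 <= n)%N -> subset (T n) (T N0).
  move=> n hn x hx; apply: (chain_le hTm (leq_maxl N1 N2)).
  by apply/(hN1 n (leq_trans (leq_maxl _ _) hn)).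
have hKs : forall n, (N0 <= n)%N -> subset (K n) (K N0).
  move=> n hn x hx; apply: (chain_le hKm (leq_maxr N1 N2)).
  by apply/(hN2 n (leq_trans (leq_maxr _ _) hn)).
have hKI : forall n, subset (K n) (I n).
  move=> n x; elim=> [|c a0 x' hc ha0 _ IH]; first by have [] := hI n.
  have [_ _ hD hMm] := hI n; apply: hD => //; apply: hMm => //; exact: JL.
have [t [ht hTt]] := fg hN (hT N0).
pose es := mkseq e k.
pose wf (t' : seq R) := flatten [seq [seq x * tb | x <- es] | tb <- t'].
have hKas : addsub (K N0) by split; [apply: Rid0|move=> x y; apply: RidB].
have hJK : forall b z, J b -> T N0 z -> K N0 (b * z).
  by move=> b z hb hz; apply: sums_J => //; apply: RidJ.
have hconv : forall t', (forall x, x \in t' -> T N0 x) ->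
    forall x, lc (@setT_R R) (@zero R) t' x -> lc L (K N0) (wf t') x.
  elim=> [|tb0 t' IH] ht' x.
    by rewrite /= /zero => ->; exact: hKas.1.
  move=> /= [c [_ hc]].
  have h1 : lc L (K N0) (wf t') (x - c * tb0).
    by apply: IH => // y hy; apply: ht'; rewrite inE hy orbT.
  have h2 : lc L (K N0) [seq y * tb0 | y <- es] (c * tb0).
    apply: (lc_mono _ (lc_mulr tb0 (Rlc c))) => y [b [hb ->]].
    by apply: hJK => //; apply: ht'; rewrite inE eqxx.
  have := lc_add Las hKas (lc_catl (wf t') L0 h2) (lc_catr [seq y * tb0 | y <- es] L0 h1).
  by move=> h; apply: (memE h); ring.
have [Mx hMx] : exists Mx, forall n, (Mx <= n)%N -> subset (I (n + N0)%N) (I (Mx + N0)%N).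
apply: (accfin (J := J) (K := K N0) (w := wf t) (N := fun n => I (n + N0)%N)
  Las L1 LM invL hKas (fun c y _ hy => RidM c (hK N0) hy)
  (fun n => hIas _) (fun n c y hc hy => (let: And4 _ _ _ h := hI (n + N0)%N%N in h) c y hc hy)).
- move=> n x hx; apply: hKI; apply: (chain_le hKm (leq_addl n N0)); exact: hx.
- move=> n x hx; apply: (hconv t ht); apply: hTt; apply: (hTs (n + N0)%N); first exact: leq_addl.
  by apply: sums_in.
- move=> j w0 hj /flatten_mapP [tb htb] /mapP [y hy ->].
  have -> : j * (y * tb) = (j * y) * tb by ring.
  by apply: hJK; [apply: (RidMr y RidJ hj)|apply: ht].
- by move=> n; apply: hmono.
exists (Mx + N0)%N => n hn x; split => hx; last first.
  by apply: (chain_le hmono hn).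
have hn' : (N0 <= n)%N by apply: leq_trans hn; apply: leq_addl.
move: (hMx (n - N0)%N); rewrite /= subnK //; apply => //.
by rewrite leq_subRL // addnC.
Qed.

End Glue.

Local Close Scope ring_scope.

Theorem theorem6p1 (dV dU : Order.disp_t) (V : porderType dV) (U : porderType dU)
    (m : V) (phi : U -> V) (R : comPzRingType) :
  maximal m -> pos_height m ->
  splitting m phi ->
  spec_iso_to (@setT_R R) U ->
  noetherian_of (@setT_R R) ->
  (forall M N : R -> Prop, maximal_ideal_of (@setT_R R) M ->
     maximal_ideal_of (@setT_R R) N -> quot_iso M N) ->
  exists L : R -> Prop, [/\ is_subring L, noetherian_of L & spec_iso_to L V].
Proof.
move=> hm _ [hsurj hmono [Ms [hMs0 hMsmax hMsiff]] huniq hlift] [f [hfp hfo hfs]] hN hiso.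
case: Ms hMs0 hMsmax hMsiff => [//|u0 Ms'] _ hMsmax hMsiff.
set Ms := u0 :: Ms' in hMsmax hMsiff.
pose us := undup Ms; pose k := size us.
have hu0 : u0 \in us by rewrite mem_undup inE eqxx.
have hk : (0 < k)%N.
  rewrite lt0n size_eq0; apply/eqP => e0; by move: hu0; rewrite -/us e0.
pose nu i := nth u0 us i.
have hnuMs : forall i, (i < k)%N -> nu i \in Ms.
  by move=> i hi; rewrite -mem_undup; apply: mem_nth.
have hidx : forall u, u \in Ms -> exists2 i, (i < k)%N & nu i = u.
  move=> u hu; exists (index u us); first by rewrite index_mem mem_undup.
  by apply: nth_index; rewrite mem_undup.
have huniqn : forall i j, (i < k)%N -> (j < k)%N -> nu i = nu j -> i = j.
  move=> i j hi hj e; apply/eqP; rewrite -(nth_uniq u0 hi hj (undup_uniq Ms)).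
  by apply/eqP.
have hRI : forall u, Rideal (f u) by move=> u; have [] := hfp u.
have hfmax : forall u, maximal u -> maximal_ideal_of (@setT_R R) (f u).
  move=> u hu; have [hI n1 _] := hfp u; split => // J' hJ' nJ' hsub.
  have [Mx [[hMxI nMx hJMx] hMxmax]] := maxcond
    (Fam := fun I => [/\ ideal_of (@setT_R R) I, ~ I 1%R & subset J' I])
    hN (fun I h => let: And3 h _ _ := h in h) (And3 hJ' nJ' (fun x h => h)).
  have hMxm : maximal_ideal_of (@setT_R R) Mx.
    split => // J'' hJ'' nJ'' hs x; split; last by apply: hs.
    apply: (hMxmax J'') => //; split => // y hy; apply: hs; exact: hJMx.
  have [t ht] := hfs _ (max_prime hMxm).
  have hut : (u <= t)%O by apply/hfo => x hx; apply/ht; apply: hJMx; apply: hsub.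
  have e := hu t hut.
  move=> x; split => [hx|hx]; last exact: hsub.
  by rewrite -e; apply/ht; apply: hJMx.
pose Mf i := f (nu i).
have hMf : forall i, (i < k)%N -> maximal_ideal_of (@setT_R R) (Mf i).
  by move=> i hi; apply: hfmax; apply: (hMsmax _ (hnuMs i hi)).1.
have ha' : forall i j, exists x, (i < k)%N -> (j < k)%N -> i != j ->
    Mf j x /\ Mf i (x - 1)%R.
  move=> i j; case: (classic [/\ (i < k)%N, (j < k)%N & i != j]) => [[hi hj hij]|hn]; last first.
    by exists 0%R => hi hj hij; exfalso; apply: hn.
  have hns : ~ subset (Mf j) (Mf i).
    move=> hs; have hle : (nu j <= nu i)%O by apply/hfo.
    have e := (hMsmax _ (hnuMs j hj)).1 _ hle.
    by move: hij; rewrite (huniqn _ _ hi hj e) eqxx.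
  have [x [hx nx]] : exists x, Mf j x /\ ~ Mf i x.
    apply: NNPP => hn; apply: hns => x hx; apply: NNPP => nx; apply: hn; by exists x.
  have [y hy] := maxinv (hMf i hi) nx.
  exists (x * y)%R => _ _ _; split => //; apply: RidMr => //; exact: hRI.
pose aa i j := sval (constructive_indefinite_description _ (ha' i j)).
have haa : forall i j, (i < k)%N -> (j < k)%N -> i != j -> Mf j (aa i j) /\ Mf i (aa i j - 1)%R.
  by move=> i j; apply: (svalP (constructive_indefinite_description _ (ha' i j))).
have hg' : forall i, exists g : R -> R, (i < k)%N ->
  [/\ (forall x y, Mf i (x - y)%R -> Mf 0%N (g x - g y)%R),
      (forall x y, Mf 0%N (g (x + y) - (g x + g y))%R),
      (forall x y, Mf 0%N (g (x * y) - g x * g y)%R),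
      Mf 0%N (g 1 - 1)%R &
      ((forall x, Mf 0%N (g x) -> Mf i x) /\ (forall y, exists x, Mf 0%N (g x - y)%R))].
  move=> i; case: (boolP (i < k)%N) => hi; last by exists id.
  have [g0 hg0] := hiso _ _ (hMf i hi) (hMf 0%N hk).
  by exists g0.
pose gg i := sval (constructive_indefinite_description _ (hg' i)).
have hgg : forall i, (i < k)%N -> _ := fun i => svalP (constructive_indefinite_description _ (hg' i)).
pose Lset := L k Mf gg.
pose Jset := J k Mf.
have hMsJ : forall u, u \in Ms -> forall x, (Lset x /\ f u x) <-> Jset x.
  move=> u hu x; have [i hi <-] := hidx u hu; split => [[hL hf]|hJ].
    apply: (JLM hk hMf haa hgg hL); apply/(LMiff hk hMf haa hgg hL hi); exact: hf.
  by split; [apply: (JL hk hMf haa hgg)|apply: hJ].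
pose pre v := sval (constructive_indefinite_description _ (hsurj v)).
have hpre : forall v, phi (pre v) = v.
  by move=> v; apply: (svalP (constructive_indefinite_description _ (hsurj v))).
have huni : forall v x y, v != m -> phi x = v -> phi y = v -> x = y.
  move=> v x y hv hx hy; have hv2 : v <> m by move=> e; rewrite e eqxx in hv.
  have [w [_ hw]] := huniq v hv2.
  by rewrite -(hw x hx) -(hw y hy).
exists Lset; split.
- exact: (subringL hk hMf haa hgg).
- exact: (noethL hk hMf haa hgg hN).
exists (fun v x => Lset x /\ f (pre v) x); split.
- move=> v; have [[hsub h0 hD hMm] n1 hp] := hfp (pre v); split; first split.
  + by move=> x [].
  + by split; [apply: (L0 hk hMf haa hgg)|].
  + move=> x y [hx1 hx2] [hy1 hy2]; split; [exact: (LD hk hMf haa hgg)|exact: hD].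
  + move=> s x hs [hx1 hx2]; split; [exact: (LM hk hMf haa hgg)|exact: hMm].
  + by move=> [_ h1]; apply: n1.
  + move=> x y hx hy [_ hxy]; case: (hp x y Logic.I Logic.I hxy) => h; [left|right]; by split.
- move=> v v'; split.
  + move=> hvv' x [hL hx].
    have hpv : (phi (pre v) <= v')%O by rewrite hpre.
    have [y' [hy'1 hy'2]] := hlift (pre v) v' hpv.
    case: (eqVneq v' m) => hv'm.
      have hy'Ms : y' \in Ms by apply/hMsiff; rewrite hy'2 hv'm.
      have hpreMs : pre v' \in Ms by apply/hMsiff; rewrite hpre hv'm.
      apply/(hMsJ _ hpreMs); apply/(hMsJ _ hy'Ms); split => //.
      exact: ((hfo _ _).1 hy'1 x hx).
    have e : y' = pre v' by apply: (huni v') => //; apply: hpre.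
    by split => //; rewrite -e; exact: ((hfo _ _).1 hy'1 x hx).
  + move=> hsub; case: (eqVneq v' m) => hv'm.
      have hpreMs : pre v' \in Ms by apply/hMsiff; rewrite hpre hv'm.
      have hLJ : forall x, Lset x -> f (pre v) x -> Jset x.
        by move=> x hL hx; apply/(hMsJ _ hpreMs x); apply: hsub.
      have [i hi hsi] := primeLJ hk hMf haa hgg (hfp (pre v)) hLJ.
      have hle : (pre v <= nu i)%O by apply/hfo.
      have := hmono _ _ hle; rewrite hpre hv'm.
      by have -> : phi (nu i) = m by apply/hMsiff; apply: hnuMs.
    have [j [hj nj]] : exists j, Jset j /\ ~ f (pre v') j.
      apply: NNPP => hn.
      have hJf : forall x, Jset x -> f (pre v') x.
        by move=> x hx; apply: NNPP => hn'; apply: hn; exists x.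
      have [i hi hsi] := primeJ hk hMf haa hgg (hfp (pre v')) hJf.
      have hle : (nu i <= pre v')%O by apply/hfo.
      have e := (hMsmax _ (hnuMs i hi)).1 _ hle.
      have : phi (pre v') = m by rewrite e; apply/hMsiff; apply: hnuMs.
      by rewrite hpre => e2; rewrite e2 eqxx in hv'm.
    have hle : (pre v <= pre v')%O.
      apply/hfo => x hx.
      have hxj : f (pre v) (x * j)%R by apply: RidMr.
      have hLxj : Lset (x * j)%R.
        by apply: (JL hk hMf haa hgg); apply: (RidM x (RidJ hk hMf haa hgg) hj).
      have [_ _ hp'] := hfp (pre v').
      by case: (hp' x j Logic.I Logic.I (hsub _ (conj hLxj hxj)).2).
    by rewrite -(hpre v) -(hpre v'); apply: hmono.
- move=> Q hQ; case: (classic (exists j, Jset j /\ ~ Q j)) => [[j [hj nj]]|hn].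
    have [hP hQP] := primeQj hk hMf haa hgg hQ hj nj.
    have [t ht] := hfs _ hP.
    have [[hQsub _ _ _] _ hQp] := hQ.
    have htm : phi t != m.
      apply/negP => /eqP e.
      have tMs : t \in Ms by apply/hMsiff.
      have [_ hft] := (hMsJ _ tMs j).2 hj.
      have hjj := (ht j).2 hft.
      have hLj := JL hk hMf haa hgg hj.
      by case: (hQp j j hLj hLj hjj).
    exists (phi t) => x; have e : pre (phi t) = t by apply: (huni (phi t)).
    rewrite e; split.
      move=> hx; have hL := hQsub _ hx; split => //; apply/(ht x); exact/(hQP x hL).1.
    by move=> [hL hft]; apply/(hQP x hL); apply/(ht x).
  have hJQ : forall x, Jset x -> Q x.
    by move=> x hx; apply: NNPP => h; apply: hn; exists x.
  exists m => x.
  have hpreMs : pre m \in Ms by apply/hMsiff; apply: hpre.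
  rewrite (primeQJ hk hMf haa hgg hQ hJQ x).
  by split => [hx|/(hMsJ _ hpreMs x) //]; apply/(hMsJ _ hpreMs x).
Qed.
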